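(* Let $X_1,\dots,X_n$ be independent real-valued random variables. Then \[E\Big[\Big|\sum_{k=1}^nX_k\Big|\wedge1\Big]\le\Big(\sum_{k=1}^nE[\tau^2(X_k)]+\Big(\sum_{k=1}^nE[\tau(X_k)]\Big)^2\Big)^{1/2}+\sum_{k=1}^nE[\tau^2(X_k)].\]
   Context: $\tau\colon\mathbb R\to\mathbb R$ is the truncation function $\tau(\alpha)=\alpha$ if $|\alpha|\le1$ and $\tau(\alpha)=\alpha/|\alpha|$ if $|\alpha|>1$. *)

(* Defs.v *)
From HB Require Import structures.
From mathcomp Require Import all_boot all_order all_algebra.
From mathcomp Require Import all_classical all_reals all_analysis.
Set Implicit Arguments. Unset Strict Implicit. Unset Printing Implicit Defensive.
Import Order.TTheory GRing.Theory Num.Theory.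
Local Open Scope classical_set_scope.
Local Open Scope ring_scope.

Definition tau {R : realType} (a : R) : R :=
  if `|a| <= 1 then a else a / `|a|.

Definition mutually_independent_RV {d} {T : measurableType d} {R : realType}
  (P : probability T R) (n : nat) (X : 'I_n -> {RV P >-> R}) : Prop :=
  forall (J : {set 'I_n}) (B : 'I_n -> set R),
    (forall j, j \in J -> measurable (B j)) ->
    P (\bigcap_(j in [set j | j \in J]) (X j @^-1` B j)) =
    (\prod_(j in J) P (X j @^-1` B j))%E.

(* Main.v *)
Require Import Defs.
From HB Require Import structures.
From mathcomp Require Import all_boot all_order all_algebra.
From mathcomp Require Import all_classical all_reals all_analysis.
From mathcomp Require Import zify lra.
Import Order.TTheory GRing.Theory Num.Theory.
Local Open Scope ring_scope.
Local Open Scope classical_set_scope.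

Section Tau.
Context (R : realType).

Lemma tauE (a : R) : tau a = Num.max (-1) (Num.min a 1).
Proof.
rewrite /tau; case: ifPn => ha.
  move: ha; rewrite ler_norml => /andP[h1 h2].
  by rewrite (min_idPl h2) (max_idPr h1).
rewrite -ltNge in ha; have [a0|a0] := leP 0 a.
  rewrite ger0_norm // in ha *; rewrite divff ?gt_eqF ?(lt_trans _ ha)//.
  by rewrite (min_idPr (ltW ha)) (max_idPr (le_trans (lerN10 R) ler01)).
rewrite ltr0_norm // in ha *; rewrite invrN mulrN divff ?lt_eqF//.
rewrite (min_idPl (le_trans (ltW a0) ler01)); apply/esym/max_idPl.
by rewrite -lerN2 opprK ltW.
Qed.

Lemma measurable_tau : measurable_fun setT (@tau R).
Proof.
rewrite (_ : tau = (fun=> -1) \max (fun x => Num.min x 1)); last first.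
  by apply/funext => x; rewrite tauE.
apply: measurable_realfun.measurable_maxr => //; exact: measurable_realfun.measurable_minr.
Qed.

Lemma tau_bound (a : R) : `|tau a| <= 1.
Proof.
rewrite tauE ler_norml; apply/andP; split; first by rewrite le_max lexx.
by rewrite ge_max (le_trans (lerN10 R) ler01) ge_min lexx orbT.
Qed.

Lemma tau_id (a : R) : `|a| <= 1 -> tau a = a.
Proof. by rewrite /tau => ->. Qed.

Lemma tau_sq (a : R) : 1 < `|a| -> tau a ^+ 2 = 1.
Proof.
rewrite /tau => h; rewrite leNgt h /= expr_div_n real_normK ?num_real//.
by rewrite divff// sqrf_eq0 -normr_eq0 gt_eqF// (lt_trans _ h).
Qed.

End Tau.

Section Approx.
Context (R : realType).

Definition Sq (m i : nat) : set R :=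
  [set r | (i%:R - m.+1%:R <= m.+1%:R * r) && (m.+1%:R * r < i%:R - m.+1%:R + 1)].

Definition hq (m : nat) (r : R) : R :=
  \sum_(i < (2 * m.+1).+1) ((i%:R - m.+1%:R) / m.+1%:R) * \1_(Sq m i) r.

Lemma Sq_meas m i : measurable (Sq m i).
Proof.
have -> : Sq m i = (fun r => m.+1%:R * r) @^-1`
    [set` Interval (BLeft (i%:R - m.+1%:R)) (BLeft (i%:R - m.+1%:R + 1))].
  by apply/seteqP; split => r /=; rewrite in_itv.
rewrite -[X in measurable X]setTI; apply: (measurable_realfun.mulrl_measurable _ measurableT).
exact: measurable_itv.
Qed.

Lemma hq_val m r : `|r| <= 1 -> hq m r = (Num.floor (m.+1%:R * r))%:~R / m.+1%:R.
Proof.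
move=> hr; set M := m.+1; set z := Num.floor (M%:R * r).
have hMr : `|M%:R * r| <= M%:R.
  by rewrite normrM ger0_norm// -[leRHS]mulr1 ler_wpM2l.
have hz1 : - (M%:Z) <= z.
  rewrite /z floor_ge_int rmorphN /=; move: hMr; rewrite ler_norml => /andP[+ _].
  by [].
have hz2 : z <= M%:Z.
  rewrite -ltzD1 /z floor_lt_int; apply: (le_lt_trans (ler_norm _)).
  apply: (le_lt_trans hMr); rewrite intrD /= ltrDl //.
have hk : (absz (z + M%:Z)%R < (2 * M).+1)%N by lia.
set i0 : 'I_(2 * M).+1 := Ordinal hk.
rewrite /hq (bigD1 i0)//= big1 ?addr0; last first.
  move=> i /negPf hi; rewrite indicE; case: (boolP (r \in Sq m i)) => //=; last by rewrite mulr0.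
  rewrite in_setE /Sq /= => hs; exfalso; move/negbT: hi => /eqP; apply.
  apply: val_inj => /=.
  have : z = (i%:Z - M%:Z).
    by apply: floor_def; rewrite !intrD !mulrNz; exact: hs.
  by move=> ->; rewrite subrK.
rewrite indicE; have -> : r \in Sq m i0.
  rewrite in_setE /Sq /=.
  have := floor_itv (M%:R * r); rewrite -/z.
  have -> : ((absz (z + M%:Z)%R)%:R : R) - M%:R = z%:~R.
    have -> : ((absz (z + M%:Z)%R)%:R : R) = (z + M%:Z)%:~R.
      have e : ((absz (z + M%:Z)%R)%:Z) = z + M%:Z by lia.
      by rewrite -[LHS]/(((absz (z + M%:Z)%R)%:Z)%:~R) e.
    by rewrite intrD /= addrK.
  by rewrite intrD.
rewrite mulr1; congr (_ / _).
have -> : ((absz (z + M%:Z)%R)%:R : R) = (z + M%:Z)%:~R.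
  have e : ((absz (z + M%:Z)%R)%:Z) = z + M%:Z by lia.
  by rewrite -[LHS]/(((absz (z + M%:Z)%R)%:Z)%:~R) e.
by rewrite intrD /= addrK.
Qed.


Lemma hq_approx m r : `|r| <= 1 ->
  `|r - hq m r| <= m.+1%:R^-1 /\ `|hq m r| <= 1.
Proof.
move=> hr; rewrite hq_val//; set M := m.+1; set z := Num.floor (M%:R * r).
have hMr : `|M%:R * r| <= M%:R.
  by rewrite normrM ger0_norm// -[leRHS]mulr1 ler_wpM2l.
have hM : (0 : R) < M%:R by [].
have [h1 h2] : (z%:~R <= M%:R * r) /\ (M%:R * r < z%:~R + 1).
  by have := floor_itv (M%:R * r); rewrite -/z intrD => /andP[].
have hz1 : - (M%:Z) <= z.
  rewrite /z floor_ge_int rmorphN /=; move: hMr; rewrite ler_norml => /andP[+ _].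
  by [].
have hz1' : - (M%:R) <= (z%:~R : R).
  by have := hz1; rewrite -(ler_int R) mulrNz.
split.
  have -> : r - z%:~R / M%:R = (M%:R * r - z%:~R) / M%:R.
    by rewrite mulrBl mulrAC divff ?mul1r// gt_eqF.
  rewrite normrM ger0_norm ?subr_ge0// gtr0_norm ?invr_gt0//.
  by rewrite -[leRHS]mul1r ler_pM2r ?invr_gt0// lerBlDr addrC ltW.
rewrite normrM [X in _ * X]gtr0_norm ?invr_gt0// ler_pdivrMr// mul1r ler_norml.
apply/andP; split => //.
by apply: (le_trans h1); apply: (le_trans (ler_norm _)).
Qed.

End Approx.

Section Frame.
Context (R : realType) (d : measure_display) (T : measurableType d)
  (P : probability T R).

Definition bm (f : T -> R) := measurable_fun setT f /\ exists M : R, forall x, `|f x| <= M.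
Definition EE (f : T -> R) := fine (expectation P f).

Lemma bm_int f : bm f -> P.-integrable setT (EFin \o f).
Proof.
move=> [mf [M HM]]; apply: measurable_bounded_integrable => //.
  by apply: (le_lt_trans (probability_le1 P measurableT)); rewrite ltry.
exists M; split; first by rewrite num_real.
move=> y My t _ /=; apply: le_trans (HM t) (ltW My).
Qed.

Lemma EEE f : EE f = \int[P]_x f x.
Proof. by rewrite /EE unlock. Qed.

Lemma expE f : bm f -> expectation P f = (EE f)%:E.
Proof. by move=> bf; rewrite /EE fineK// unlock; apply: integrable_fin_num => //; exact: bm_int. Qed.

Lemma bmD {f g} : bm f -> bm g -> bm (fun x => f x + g x).
Proof.
move=> [mf [M HM]] [mg [N HN]]; split; first exact: measurable_realfun.measurable_funD.
by exists (M + N) => x; apply: le_trans (ler_normD _ _) _; apply: lerD.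
Qed.

Lemma bmM {f g} : bm f -> bm g -> bm (fun x => f x * g x).
Proof.
move=> [mf [M HM]] [mg [N HN]]; split; first exact: measurable_realfun.measurable_funM.
exists (M * N) => x; rewrite normrM; apply: ler_pM => //.
Qed.

Lemma bmC c : bm (fun _ => c).
Proof. by split => //; exists `|c|. Qed.

Lemma bmN {f} : bm f -> bm (fun x => - f x).
Proof.
move=> [mf [M HM]]; split; first exact: measurable_realfun.measurable_funN.
by exists M => x; rewrite normrN.
Qed.

Lemma bmB {f g} : bm f -> bm g -> bm (fun x => f x - g x).
Proof. by move=> bf bg; apply: bmD => //; exact: bmN. Qed.

Lemma bmZ c {f} : bm f -> bm (fun x => c * f x).
Proof. by move=> bf; apply: bmM => //; exact: bmC. Qed.

Lemma bmA {f} : bm f -> bm (fun x => `|f x|).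
Proof.
move=> [mf [M HM]]; split; first exact: measurableT_comp.
by exists M => x; rewrite normr_id.
Qed.

Lemma bm_sum (I : Type) (r : seq I) (F : I -> T -> R) :
  (forall i, bm (F i)) -> bm (fun x => \sum_(i <- r) F i x).
Proof.
move=> bF; elim: r => [|a r IH].
  by under eq_fun do rewrite big_nil; exact: bmC.
by under eq_fun do rewrite big_cons; exact: bmD.
Qed.

Lemma EED {f g} : bm f -> bm g -> EE (fun x => f x + g x) = EE f + EE g.
Proof. by move=> bf bg; rewrite !EEE RintegralD//; exact: bm_int. Qed.

Lemma EEB {f g} : bm f -> bm g -> EE (fun x => f x - g x) = EE f - EE g.
Proof. by move=> bf bg; rewrite !EEE RintegralB//; exact: bm_int. Qed.

Lemma EEZ c {f} : bm f -> EE (fun x => c * f x) = c * EE f.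
Proof. by move=> bf; rewrite !EEE RintegralZl//; exact: bm_int. Qed.

Lemma EEC c : EE (fun _ => c) = c.
Proof. rewrite EEE Rintegral_cst//; transitivity (c * fine (P setT)); first by []. by rewrite (probability_setT P) mulr1. Qed.

Lemma EE_le {f g} : bm f -> bm g -> (forall x, f x <= g x) -> EE f <= EE g.
Proof. by move=> bf bg fg; rewrite !EEE le_Rintegral//; exact: bm_int. Qed.

Lemma EE_norm {f} : bm f -> `|EE f| <= EE (fun x => `|f x|).
Proof. by move=> bf; rewrite !EEE le_normr_Rintegral//; exact: bm_int. Qed.

Lemma EE_sum (I : Type) (r : seq I) (F : I -> T -> R) :
  (forall i, bm (F i)) -> EE (fun x => \sum_(i <- r) F i x) = \sum_(i <- r) EE (F i).
Proof.
move=> bF; elim: r => [|a r IH].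
  by under eq_fun do rewrite big_nil; rewrite EEC big_nil.
under eq_fun do rewrite big_cons; rewrite EED ?big_cons ?IH//.
exact: bm_sum.
Qed.

Lemma EE_bound f g (c : R) : bm f -> bm g -> (forall x, `|f x - g x| <= c) ->
  `|EE f - EE g| <= c.
Proof.
move=> bf bg H; rewrite -(EEB bf bg); apply: le_trans (EE_norm (bmB bf bg : bm (fun x => f x - g x))) _.
by rewrite -(EEC c); apply: EE_le => //; [exact/bmA/bmB|exact: bmC].
Qed.

Lemma EE_indic (A : set T) : measurable A -> EE (\1_A) = fine (P A).
Proof. by move=> mA; rewrite /EE expectation_indic. Qed.

Lemma bmI (A : set T) : measurable A -> bm (\1_A).
Proof.
move=> mA; split; first exact: measurable_realfun.measurable_indic.
by exists 1 => x; rewrite indicE; case: (x \in A) => /=; rewrite ?normr1 ?normr0.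
Qed.

Lemma bm_simple (I : Type) (r : seq I) (c : I -> R) (A : I -> set T) :
  (forall i, measurable (A i)) -> bm (fun w => \sum_(i <- r) c i * \1_(A i) w).
Proof. by move=> mA; apply: bm_sum => i; apply: bmZ; exact: bmI. Qed.

Lemma EE_simple (I : Type) (r : seq I) (c : I -> R) (A : I -> set T) :
  (forall i, measurable (A i)) ->
  EE (fun w => \sum_(i <- r) c i * \1_(A i) w) = \sum_(i <- r) c i * fine (P (A i)).
Proof.
move=> mA; rewrite EE_sum; last by move=> i; apply: bmZ; exact: bmI.
by apply: eq_bigr => i _; rewrite EEZ ?EE_indic//; exact: bmI.
Qed.

Lemma EE_simple_prod (I J : Type) (r : seq I) (s : seq J) (c : I -> R) (e : J -> R)
  (A : I -> set T) (B : J -> set T) :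
  (forall i, measurable (A i)) -> (forall l, measurable (B l)) ->
  (forall i l, P (A i `&` B l) = (P (A i) * P (B l))%E) ->
  EE (fun w => (\sum_(i <- r) c i * \1_(A i) w) * (\sum_(l <- s) e l * \1_(B l) w)) =
  EE (fun w => \sum_(i <- r) c i * \1_(A i) w) * EE (fun w => \sum_(l <- s) e l * \1_(B l) w).
Proof.
move=> mA mB hAB; rewrite !EE_simple//.
transitivity (EE (fun w => \sum_(i <- r) \sum_(l <- s) (c i * e l) * \1_(A i `&` B l) w)).
  congr EE; apply/funext => w; rewrite mulr_suml; apply: eq_bigr => i _.
  rewrite mulr_sumr; apply: eq_bigr => l _; rewrite indicI /=.
  by rewrite mulrACA.
rewrite EE_sum; last by move=> i; apply: bm_simple => l; exact: measurableI.
rewrite mulr_suml; apply: eq_bigr => i _.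
rewrite EE_simple; last by move=> l; exact: measurableI.
rewrite mulr_sumr; apply: eq_bigr => l _.
rewrite hAB fineM ?fin_num_measure//.
by rewrite mulrACA.
Qed.


Lemma prod_bound (a b a' b' e : R) : `|a| <= 1 -> `|b'| <= 1 ->
  `|a - a'| <= e -> `|b - b'| <= e -> `|a * b - a' * b'| <= e + e.
Proof.
move=> ha hb h1 h2.
have -> : a * b - a' * b' = a * (b - b') + (a - a') * b'.
  by rewrite mulrBr mulrBl addrA subrK.
apply: (le_trans (ler_normD _ _)); rewrite !normrM; apply: lerD.
  by rewrite -[leRHS]mul1r ler_pM.
by rewrite -[leRHS]mulr1 ler_pM.
Qed.

Lemma eq0_small (x c : R) : (forall m : nat, `|x| <= c / m.+1%:R) -> x = 0.
Proof.
move=> H; case: (eqVneq x 0) => // hx; exfalso.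
have hp : 0 < `|x| by rewrite normr_gt0.
set m := Num.truncn (c / `|x|).
have h1 : c / `|x| < m.+1%:R by exact: truncnS_gt.
have := H m; rewrite ler_pdivlMr// => h2.
move: h1; rewrite ltr_pdivrMr// => h1.
by rewrite mulrC in h2; have := lt_le_trans h1 h2; rewrite ltxx.
Qed.

Context (n : nat) (X : 'I_n -> {RV P >-> R}) (hX : mutually_independent_RV X).

Lemma pair_indep (j k : 'I_n) (A B : set R) : j != k -> measurable A -> measurable B ->
  P (X j @^-1` A `&` X k @^-1` B) = (P (X j @^-1` A) * P (X k @^-1` B))%E.
Proof.
move=> jk mA mB.
have kj : (k == j) = false by rewrite eq_sym (negPf jk).
have := hX ([set j; k])%SET (fun i => if i == j then A else B).
have -> : \bigcap_(i in [set i | i \in ([set j; k])%SET]) (X i @^-1` (if i == j then A else B))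
    = X j @^-1` A `&` X k @^-1` B.
  apply/seteqP; split => w /=.
    move=> h; split.
      by have := h j (set21 j k); rewrite eqxx.
    by have := h k (set22 j k); rewrite kj.
  move=> [hA hB] i /=; rewrite in_set2 => /orP[] /eqP ->; by rewrite ?eqxx ?kj.
move=> ->; last by move=> i _; case: (i == j).
rewrite (big_setD1 j) ?set21 //=.
have -> : ([set j; k] :\ j = [set k])%SET.
  by rewrite setU1K // !inE.

by rewrite finset.big_set1 eqxx kj.
Qed.

Lemma bmY k : bm (fun w => tau (X k w)).
Proof.
split; first exact: measurableT_comp (@measurable_tau R) (measurable_funPT (X k)).
by exists 1 => w; exact: tau_bound.
Qed.

Definition Aset m k (i : nat) := X k @^-1` (tau @^-1` Sq R m i).

Lemma Aset_meas m k i : measurable (Aset m k i).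
Proof.
have mt : measurable (tau @^-1` Sq R m i).
  by rewrite -[X in measurable X]setTI; apply: measurable_tau => //; exact: Sq_meas.
rewrite /Aset -[X in measurable X]setTI; exact: (measurable_funPT (X k)).
Qed.

Lemma hqY m k : (fun w => hq R m (tau (X k w))) =
  (fun w => \sum_(i < (2 * m.+1).+1) ((i%:R - m.+1%:R) / m.+1%:R) * \1_(Aset m k i) w).
Proof.
apply/funext => w; rewrite /hq; apply: eq_bigr => i _; congr (_ * _).
Qed.

Lemma indep_hq m j k : j != k ->
  EE (fun w => hq R m (tau (X j w)) * hq R m (tau (X k w))) =
  EE (fun w => hq R m (tau (X j w))) * EE (fun w => hq R m (tau (X k w))).
Proof.
move=> jk.
have -> : (fun w => hq R m (tau (X j w)) * hq R m (tau (X k w))) =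
  (fun w => (\sum_(i < (2 * m.+1).+1) ((i%:R - m.+1%:R) / m.+1%:R) * \1_(Aset m j i) w) *
            (\sum_(i < (2 * m.+1).+1) ((i%:R - m.+1%:R) / m.+1%:R) * \1_(Aset m k i) w)).
  by apply/funext => w; rewrite (congr1 (fun f => f w) (hqY m j)) (congr1 (fun f => f w) (hqY m k)).
rewrite EE_simple_prod; first by rewrite -!hqY.
- by move=> i; exact: Aset_meas.
- by move=> i; exact: Aset_meas.
- move=> i l; rewrite /Aset pair_indep//.
  + by rewrite -[X in measurable X]setTI; apply: measurable_tau => //; exact: Sq_meas.
  + by rewrite -[X in measurable X]setTI; apply: measurable_tau => //; exact: Sq_meas.
Qed.


Lemma bmhq m k : bm (fun w => hq R m (tau (X k w))).
Proof. by rewrite hqY; apply: bm_simple => i; exact: Aset_meas. Qed.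

Lemma EE_le1 f : bm f -> (forall w, `|f w| <= 1) -> `|EE f| <= 1.
Proof.
move=> bf h; have := @EE_bound f (fun _ => 0) 1 bf (bmC 0).
by rewrite EEC subr0; apply => w; rewrite subr0.
Qed.

Lemma indepY j k : j != k ->
  EE (fun w => tau (X j w) * tau (X k w)) = EE (fun w => tau (X j w)) * EE (fun w => tau (X k w)).
Proof.
move=> jk; apply/eqP; rewrite -subr_eq0; apply/eqP; apply: (@eq0_small _ 4) => m.
set a := EE (fun w => tau (X j w) * tau (X k w)).
set a' := EE (fun w => hq R m (tau (X j w)) * hq R m (tau (X k w))).
have e : (m.+1%:R^-1 : R) + m.+1%:R^-1 = 2 / m.+1%:R by rewrite mulr_natl mulr2n.
have h1 : `|a - a'| <= 2 / m.+1%:R.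
  rewrite -e; apply: EE_bound; [exact: bmM (bmY j) (bmY k)|exact: bmM (bmhq m j) (bmhq m k)|].
  move=> w; have [h1 h2] := hq_approx R m _ (tau_bound R (X j w)).
  have [h3 h4] := hq_approx R m _ (tau_bound R (X k w)).
  by apply: prod_bound => //; exact: tau_bound.
have h2 : `|EE (fun w => tau (X j w)) * EE (fun w => tau (X k w)) - a'| <= 2 / m.+1%:R.
  rewrite /a' indep_hq// -e; apply: prod_bound.
  - by apply: EE_le1 (bmY j) _ => w; exact: tau_bound.
  - by apply: EE_le1 (bmhq m k) _ => w; have [] := hq_approx R m _ (tau_bound R (X k w)).
  - apply: EE_bound (bmY j) (bmhq m j) _ => w.
    by have [] := hq_approx R m _ (tau_bound R (X j w)).
  - apply: EE_bound (bmY k) (bmhq m k) _ => w.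
    by have [] := hq_approx R m _ (tau_bound R (X k w)).
have -> : a - EE (fun w => tau (X j w)) * EE (fun w => tau (X k w)) =
  (a - a') - (EE (fun w => tau (X j w)) * EE (fun w => tau (X k w)) - a').
  by rewrite opprB addrA subrK.
apply: (le_trans (ler_normB _ _)).
by apply: le_trans (lerD h1 h2) _; rewrite -mulrDl -natrD.
Qed.


Lemma bmmin : bm (fun w => Num.min `|\sum_(k < n) X k w| 1).
Proof.
split.
  apply: measurable_realfun.measurable_minr => //.
  apply: measurableT_comp => //; apply: measurable_sum => k.
  exact: measurable_funPT.
exists 1 => w; rewrite ger0_norm ?le_min ?ler01 ?andbT// ge_min lexx orbT.
Qed.

Lemma pointwise w : Num.min `|\sum_(k < n) X k w| 1 <=
  `|\sum_(k < n) tau (X k w)| + \sum_(k < n) tau (X k w) ^+ 2.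
Proof.
have s0 : 0 <= \sum_(k < n) tau (X k w) ^+ 2 by apply: sumr_ge0 => k _; exact: sqr_ge0.
case: (boolP [forall k, `|X k w| <= 1]) => H.
  have -> : \sum_(k < n) X k w = \sum_(k < n) tau (X k w).
    by apply: eq_bigr => k _; rewrite tau_id//; exact: (forallP H k).
  by rewrite ge_min lerDl s0.
move/forallPn: H => [k]; rewrite -ltNge => hk.
rewrite ge_min; apply/orP; right.
apply: (le_trans (y := \sum_(k < n) tau (X k w) ^+ 2)); last by rewrite lerDr normr_ge0.
by rewrite (bigD1 k)//= tau_sq// lerDl sumr_ge0// => i _; exact: sqr_ge0.
Qed.

Lemma main_ineq :
  EE (fun w => Num.min `|\sum_(k < n) X k w| 1) <=
  Num.sqrt (\sum_(k < n) EE (fun w => tau (X k w) ^+ 2)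
            + (\sum_(k < n) EE (fun w => tau (X k w))) ^+ 2)
  + \sum_(k < n) EE (fun w => tau (X k w) ^+ 2).
Proof.
set S := fun w => \sum_(k < n) tau (X k w).
have bS : bm S by apply: bm_sum => k; exact: bmY.
have bsq k : bm (fun w => tau (X k w) ^+ 2) by apply: bmM; exact: bmY.
apply: (le_trans (EE_le bmmin _ pointwise)); first by apply: bmD; [exact: bmA|exact: bm_sum].
rewrite EED; [|exact: bmA|exact: bm_sum]; rewrite EE_sum//; apply: lerD => //.
set a := EE (fun w => `|S w|).
have a0 : 0 <= a by rewrite /a -(EEC 0); apply: EE_le => //; [exact: bmC|exact: bmA].
have hS2 : a ^+ 2 <= EE (fun w => S w ^+ 2).
  have := @EE_le (fun w => (2 * a) * `|S w|) (fun w => S w ^+ 2 + a ^+ 2).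
  rewrite EEZ; last exact: bmA.
  rewrite EED; [|exact: bmM|exact: bmC]; rewrite EEC.
  move=> /(_ (bmZ _ (bmA bS)) (bmD (bmM bS bS) (bmC _))).
  have hpt : forall w, 2 * a * `|S w| <= S w ^+ 2 + a ^+ 2.
    move=> w; have := sqr_ge0 (`|S w| - a); rewrite sqrrB real_normK ?num_real//.
    move=> h; rewrite mulr2n in h; nra.
  move=> /(_ hpt); rewrite -/a.
  move=> h; nra.
apply: (le_trans (y := Num.sqrt (EE (fun w => S w ^+ 2)))).
  by rewrite -(ger0_norm a0) -sqrtr_sqr ler_wsqrtr.
apply: ler_wsqrtr.
have -> : (fun w => S w ^+ 2) = (fun w => \sum_(j < n) \sum_(k < n) tau (X j w) * tau (X k w)).
  apply/funext => w; rewrite /S expr2 mulr_suml; apply: eq_bigr => j _.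
  by rewrite mulr_sumr.
rewrite EE_sum; last by move=> j; apply: bm_sum => k; apply: bmM; exact: bmY.
rewrite (eq_bigr (fun j => \sum_(k < n) EE (fun w => tau (X j w) * tau (X k w)))); last first.
  by move=> j _; rewrite EE_sum // => k; apply: bmM; exact: bmY.
rewrite expr2 mulr_suml.
under [X in _ <= _ + X]eq_bigr do rewrite mulr_sumr.
apply: (le_trans (y := \sum_(j < n) \sum_(k < n)
   (EE (fun w => tau (X j w)) * EE (fun w => tau (X k w)) +
    (if k == j then EE (fun w => tau (X j w) ^+ 2) else 0)))).
  apply: ler_sum => j _; apply: ler_sum => k _.
  case: (eqVneq k j) => [->|kj].
    have -> : EE (fun w => tau (X j w) ^+ 2) = EE (fun w => tau (X j w) * tau (X j w)) by [].
    by rewrite lerDr -expr2 sqr_ge0.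
  by rewrite addr0 indepY// eq_sym.
rewrite addrC -big_split /= le_eqVlt; apply/orP; left; apply/eqP.
apply: eq_bigr => j _.
by rewrite big_split /= -big_mkcond big_pred1_eq addrC.
Qed.

End Frame.

Local Close Scope classical_set_scope.

Theorem lemma3p10 (R : realType) (d : measure_display) (T : measurableType d)
  (P : probability T R) (n : nat) (X : 'I_n -> {RV P >-> R}) :
  mutually_independent_RV X ->
  (expectation P (fun w => (Num.min `|\sum_(k < n) X k w| 1)%R) <=
   EFin (Num.sqrt (\sum_(k < n) fine (expectation P (fun w => (tau (X k w) ^+ 2)%R))
                   + (\sum_(k < n) fine (expectation P (fun w => tau (X k w)))) ^+ 2)
         + \sum_(k < n) fine (expectation P (fun w => (tau (X k w) ^+ 2)%R)))%R)%E.
Proof.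
move=> hX; rewrite (@expE R d T P _ (@bmmin R d T P n X)) lee_fin.
exact: (@main_ineq R d T P n X hX).
Qed.
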